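(* Let $K\ge2$, $r\in[0,1]^K$ with a unique maximizing index $a^*$, $\pi^*$ the point mass on $a^*$, and $g(\theta)=\pi_\theta^\top r$ with $\pi_\theta=\mathrm{softmax}(\theta)$. Let $\theta_1\in\mathbb{R}^K$ and $\theta_{t+1}=\theta_t+\eta\,\nabla g(\theta_t)/\|\nabla g(\theta_t)\|_2$ with $\eta=1/6$. Then $c:=\inf_{t\ge1}\pi_{\theta_t}(a^* )>0$ (a constant depending on $r$ and $\theta_1$ but not on $t$), and for all $t\ge1$, $$(\pi^*-\pi_{\theta_t})^\top r\le e^{-\frac{c\,(t-1)}{12}}\,(\pi^*-\pi_{\theta_1})^\top r.$$
   Context: $\mathrm{softmax}(\theta)(a)=e^{\theta(a)}/\sum_{a'}e^{\theta(a')}$. *)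

(* Defs.v *)
From mathcomp Require Import all_boot all_order all_algebra.
From mathcomp Require Import all_classical all_reals all_analysis.
Set Implicit Arguments. Unset Strict Implicit. Unset Printing Implicit Defensive.
Import Order.TTheory GRing.Theory Num.Theory.
Local Open Scope ring_scope.
Local Open Scope classical_set_scope.

Section Defs.
Variables (R : realType) (K : nat).

Definition softmax (theta : 'I_K -> R) (a : 'I_K) : R :=
  expR (theta a) / \sum_(b < K) expR (theta b).

Definition value (r : 'I_K -> R) (theta : 'I_K -> R) : R :=
  \sum_(a < K) softmax theta a * r a.

Definition partial (f : ('I_K -> R) -> R) (theta : 'I_K -> R) (a : 'I_K) : R :=
  derive1 (fun h : R => f (fun b => theta b + (if b == a then h else 0))) 0.

Definition grad (f : ('I_K -> R) -> R) (theta : 'I_K -> R) : 'I_K -> R :=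
  fun a => partial f theta a.

Definition norm2 (v : 'I_K -> R) : R := Num.sqrt (\sum_(a < K) v a ^+ 2).

Definition npg_step (r : 'I_K -> R) (eta : R) (theta : 'I_K -> R) : 'I_K -> R :=
  fun a => theta a + eta * (grad (value r) theta a / norm2 (grad (value r) theta)).

Definition point_mass (astar : 'I_K) : 'I_K -> R :=
  fun a => if a == astar then 1 else 0.

Definition gap (r : 'I_K -> R) (astar : 'I_K) (theta : 'I_K -> R) : R :=
  \sum_(a < K) (point_mass astar a - softmax theta a) * r a.

End Defs.

(* Main.v *)
Require Import Defs.
From mathcomp Require Import all_boot all_order all_algebra.
From mathcomp Require Import all_classical all_reals all_analysis.
From mathcomp Require Import ring lra.
Import Order.TTheory GRing.Theory Num.Theory.
Local Open Scope ring_scope.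
Local Open Scope classical_set_scope.

Section S.
Variables (R : realType) (K : nat) (r : 'I_K -> R).
Hypothesis K0 : (0 < K)%N.
Hypothesis hK2 : (1 < K)%N.
Hypothesis hr : forall a, 0 <= r a <= 1.
Variable astar : 'I_K.
Hypothesis hmax : forall a, a != astar -> r a < r astar.
Implicit Types (th : 'I_K -> R).

Definition Zs th := \sum_(b < K) expR (th b).

Lemma Zs_gt0 th : 0 < Zs th.
Proof.
 rewrite /Zs (bigD1 (Ordinal K0)) //=.
by rewrite ltr_pwDl ?expR_gt0 // sumr_ge0 // => i _; rewrite ltW ?expR_gt0.
Qed.

Lemma is_derive_coord th (a b : 'I_K) :
  is_derive (0:R) (1:R) (fun h : R => expR (th b + (if b == a then h else 0)))
     (if b == a then expR (th b) else 0).
Proof.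
case: eqP => _.
  have -> : (fun h : R => expR (th b + h)) = expR \o (fun h => th b + h) by [].
  have := @is_derive1_comp R expR (fun h => th b + h) 0 (expR (th b + 0)) 1.
  rewrite addr0 mulr1; apply => //.
  have -> : (fun h : R => th b + h) = shift (th b) by apply/funext => h /=; rewrite addrC.
  exact: is_derive_shift.
have -> : (fun h : R => expR (th b + 0)) = cst (expR (th b + 0)) by [].
exact: is_derive_cst.
Qed.

Lemma value_quot th : value r th = (\sum_(b < K) expR (th b) * r b) / Zs th.
Proof.
rewrite /value /softmax mulr_suml; apply: eq_bigr => b _.
by rewrite mulrAC.
Qed.

Lemma partial_value th a :
  partial (value r) th a = softmax th a * (r a - value r th).
Proof.
pose F b := fun h : R => expR (th b + (if b == a then h else 0)).
pose Nf := \sum_(b < K) (fun h => F b h * r b).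
pose Df := \sum_(b < K) F b.
have fE : (fun h : R => value r (fun b => th b + (if b == a then h else 0)))
   = Nf * (fun h => (Df h)^-1).
  apply/funext => h; rewrite value_quot /Nf /Df !fct_sumE /=.
  by [].
have F0 b : F b 0 = expR (th b) by rewrite /F; case: eqP; rewrite addr0.
have Df0 : Df 0 = Zs th by rewrite /Df fct_sumE; apply: eq_bigr => b _; rewrite F0.
have Nf0 : Nf 0 = \sum_(b < K) expR (th b) * r b.
  by rewrite /Nf fct_sumE; apply: eq_bigr => b _; rewrite F0.
have dF b : is_derive (0:R) (1:R) (F b) (if b == a then expR (th b) else 0).
  exact: is_derive_coord.
have dN : is_derive (0:R) (1:R) Nf (\sum_(b < K) (if b == a then expR (th b) else 0) * r b).
  apply: is_derive_sum => b.
  have := @is_deriveM R R (F b) (cst (r b)) 0 1 _ 0 (dF b) (is_derive_cst _ _ _).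
  move=> H; apply: is_derive_eq.
  by rewrite scaler0 add0r /=; exact: mulrC.
have dD : is_derive (0:R) (1:R) Df (\sum_(b < K) (if b == a then expR (th b) else 0)).
  exact: is_derive_sum.
have Dn0 : Df 0 != 0 by rewrite Df0 gt_eqF // Zs_gt0.
have dV := is_deriveV Dn0 dD.
have dM := is_deriveM dN dV.
rewrite /partial derive1E fE derive_val.
rewrite (bigD1 a) //= eqxx big1 => [|b /negbTE ->] //.
rewrite (bigD1 a (P:=predT)) //= eqxx big1 => [|b /negbTE ->]; last by rewrite mul0r.
rewrite !addr0 Df0 Nf0 value_quot /softmax /GRing.scale /=.
rewrite -/(Zs th).
have := Zs_gt0 th; set Z := Zs th => Zgt.
set A := \sum_(b < K) _.
field; exact: lt0r_neq0.
Qed.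


Lemma softmax_gt0 th a : 0 < softmax th a.
Proof. by rewrite /softmax divr_gt0 ?expR_gt0 // -/(Zs th) Zs_gt0. Qed.

Lemma sum_softmax th : \sum_(a < K) softmax th a = 1.
Proof.
rewrite /softmax -mulr_suml -/(Zs th) divff //; exact: lt0r_neq0 (Zs_gt0 th).
Qed.

Lemma value_sum th : value r th = \sum_(a < K) softmax th a * r a.
Proof. by []. Qed.

Lemma sum_pw th : \sum_(a < K) softmax th a * (r a - value r th) = 0.
Proof.
under eq_bigr => a _ do rewrite mulrBr.
by rewrite sumrB -mulr_suml sum_softmax mul1r subrr.
Qed.

Lemma value_ge0 th : 0 <= value r th.
Proof.
apply: sumr_ge0 => a _; apply: mulr_ge0; first exact: ltW (softmax_gt0 _ _).
by case/andP: (hr a).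
Qed.

Lemma value_le1 th : value r th <= 1.
Proof.
rewrite -(sum_softmax th) /value; apply: ler_sum => a _.
apply: ler_piMr; first exact: ltW (softmax_gt0 _ _).
by case/andP: (hr a).
Qed.

Lemma exists_other : exists b : 'I_K, b != astar.
Proof.
case: (eqVneq astar (Ordinal K0)) => [e|ne]; last by exists (Ordinal K0); rewrite eq_sym.
by exists (Ordinal hK2); rewrite e -val_eqE.
Qed.

Lemma gap_val th : gap r astar th = r astar - value r th.
Proof.
rewrite /gap; under eq_bigr => a _ do rewrite mulrBl.
rewrite sumrB value_sum; congr (_ - _).
rewrite (bigD1 astar) //= /point_mass eqxx mul1r big1 ?addr0 // => a /negbTE ->.
by rewrite mul0r.
Qed.

Lemma gap_eq th : gap r astar th = \sum_(a < K) softmax th a * (r astar - r a).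
Proof.
rewrite gap_val -[X in X - _]mul1r -(sum_softmax th) mulr_suml value_sum -sumrB.
by apply: eq_bigr => a _; rewrite mulrBr.
Qed.

Lemma value_lt th : value r th < r astar.
Proof.
rewrite -subr_gt0 -[X in X - _]mul1r -(sum_softmax th) mulr_suml value_sum -sumrB.
have [b hb] := exists_other.
rewrite (bigD1 b) //= ltr_pwDl //.
  by rewrite -mulrBr mulr_gt0 ?softmax_gt0 // subr_gt0 hmax.
apply: sumr_ge0 => a _; rewrite -mulrBr; apply: mulr_ge0; first exact: ltW (softmax_gt0 _ _).
rewrite subr_ge0; by case: (eqVneq a astar) => [->|/hmax/ltW].
Qed.



Definition Gv th a := softmax th a * (r a - value r th).
Definition Nv th := norm2 (Gv th).

Lemma grad_eq th : grad (value r) th = Gv th.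
Proof. by apply/funext => a; rewrite /grad partial_value. Qed.

Lemma Nv_ge0 th : 0 <= Nv th.
Proof. exact: sqrtr_ge0. Qed.

Lemma Nv_sq th : Nv th ^+ 2 = \sum_(a < K) Gv th a ^+ 2.
Proof. by rewrite /Nv /norm2 sqr_sqrtr // sumr_ge0 // => a _; rewrite sqr_ge0. Qed.

Lemma G_le_N th a : `|Gv th a| <= Nv th.
Proof.
rewrite -sqrtr_sqr /Nv /norm2; apply: ler_wsqrtr.
by rewrite (bigD1 a) //= lerDl sumr_ge0 // => b _; rewrite sqr_ge0.
Qed.

Lemma Gstar_gt0 th : 0 < Gv th astar.
Proof. by rewrite /Gv mulr_gt0 ?softmax_gt0 // subr_gt0 value_lt. Qed.

Lemma Nv_gt0 th : 0 < Nv th.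
Proof. exact: lt_le_trans (Gstar_gt0 th) (le_trans (ler_norm _) (G_le_N th astar)). Qed.

Lemma NL th : softmax th astar * gap r astar th <= Nv th.
Proof.
rewrite gap_val; apply: le_trans (G_le_N th astar); exact: ler_norm.
Qed.

Lemma N_le_sumabs th : Nv th <= \sum_(a < K) `|Gv th a|.
Proof.
have s0 : 0 <= \sum_(a < K) `|Gv th a| by apply: sumr_ge0 => a _.
rewrite -(ger0_norm s0) -sqrtr_sqr /Nv /norm2; apply: ler_wsqrtr.
rewrite expr2 mulr_suml; apply: ler_sum => a _.
rewrite -real_normK ?num_real // expr2 ler_wpM2l //.
by rewrite (bigD1 a) //= lerDl sumr_ge0.
Qed.

Lemma sum_G th : \sum_(a < K) Gv th a = 0.
Proof. exact: sum_pw. Qed.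


Lemma value_shift th (x : 'I_K -> R) :
  value r (fun a => th a + x a) - value r th =
  (\sum_(a < K) softmax th a * expR (x a) * (r a - value r th)) /
  (\sum_(a < K) softmax th a * expR (x a)).
Proof.
set D := \sum_(a < K) softmax th a * expR (x a).
have Zgt := Zs_gt0 th.
have S'gt : 0 < \sum_(b < K) expR (th b) * expR (x b).
  rewrite (eq_bigr (fun b => expR (th b + x b))) => [|b _]; last by rewrite expRD.
  exact: (Zs_gt0 (fun b => th b + x b)).
have DE : D = (\sum_(b < K) expR (th b) * expR (x b)) / Zs th.
  by rewrite /D mulr_suml; apply: eq_bigr => b _; rewrite /softmax mulrAC.
have Dgt : 0 < D by rewrite DE divr_gt0.
have sm a : softmax (fun b => th b + x b) a = softmax th a * expR (x a) / D.
  rewrite /softmax expRD; under eq_bigr => b _ do rewrite expRD.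
  rewrite DE -/(Zs th); field.
  by rewrite (lt0r_neq0 Zgt) (lt0r_neq0 S'gt).
rewrite value_sum; under eq_bigr => a _ do rewrite sm.
have E1 : \sum_(a < K) softmax th a * expR (x a) / D * r a =
    (\sum_(a < K) softmax th a * expR (x a) * r a) / D.
  by rewrite mulr_suml; apply: eq_bigr => a _; rewrite mulrAC.
have E2 : \sum_(a < K) softmax th a * expR (x a) * (r a - value r th) =
    \sum_(a < K) softmax th a * expR (x a) * r a - value r th * D.
  by rewrite /D mulr_sumr -sumrB; apply: eq_bigr => a _; ring.
rewrite E1 E2; field; exact: lt0r_neq0.
Qed.


Lemma exp_term (k w : R) : 0 <= k -> `|k * w| <= 1/6 ->
  5/6 * k * w ^+ 2 <= (expR (k * w) - 1) * w.
Proof.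
move=> k0 hkw.
have h1 := expR_ge1Dx (k * w).
have h2 := expR_ge1Dx (- (k * w)).
have h3 : expR (k * w) * expR (- (k * w)) = 1 by rewrite -expRD subrr expR0.
have Egt := expR_gt0 (k * w).
set E := expR (k * w) in h1 h3 Egt *; set E' := expR (- (k * w)) in h2 h3 *.
have kw2 : 0 <= k * w ^+ 2 by rewrite mulr_ge0 ?sqr_ge0.
case: (leP 0 w) => hw.
  have : 0 <= (E - 1 - k * w) * w by rewrite mulr_ge0 //; lra.
  nra.
have hkw' : - (k * w) <= 1/6 by apply: le_trans hkw; rewrite -normrN ler_norm.
have kw0 : 0 <= - (k * w) by nra.
have s1 : E * (1 - k * w) <= 1 by nra.
have s2 : - (k * w) * (1 + k * w) <= - (k * w) * E by nra.
have s3 : 5/6 * (- (k * w)) <= 1 - E by nra.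
have : 5/6 * (- (k * w)) * (- w) <= (1 - E) * (- w) by rewrite ler_wpM2r // oppr_ge0 ltW.
have -> : 5 / 6 * k * w ^+ 2 = 5/6 * (- (k * w)) * (- w) by ring.
by have -> : (E - 1) * w = (1 - E) * (- w) by ring.
Qed.


Lemma expR16 : expR (1/6 : R) <= 6/5.
Proof.
have h2 := expR_ge1Dx (- (1/6 : R)).
have h3 : expR (1/6 : R) * expR (- (1/6)) = 1 by rewrite -expRD subrr expR0.
have := expR_gt0 (1/6 : R). nra.
Qed.

Lemma npg_stepE th :
  npg_step r (1/6) th = (fun a => th a + 1/6 * (Gv th a / Nv th)).
Proof. by rewrite /npg_step grad_eq. Qed.

Lemma progress th : Nv th / 12 <= value r (npg_step r (1/6) th) - value r th.
Proof.
have Ngt := Nv_gt0 th.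
set N := Nv th.
pose x := fun a => 1 / 6 * (Gv th a / N).
rewrite npg_stepE (value_shift th x).
set p := value r th.
have xE a : x a = (softmax th a / (6 * N)) * (r a - p).
  rewrite /x /Gv -/p; field; exact: lt0r_neq0.
have xle a : `|x a| <= 1/6.
  have h := G_le_N th a; rewrite -/N in h.
  have Ni : 0 <= N^-1 by rewrite invr_ge0 ltW.
  rewrite /x normrM (ger0_norm (x := 1/6)) // normrM (ger0_norm Ni).
  have : `|Gv th a| * N^-1 <= 1 by rewrite ler_pdivrMr // mul1r.
  lra.
set D := \sum_(a < K) softmax th a * expR (x a).
have Dle : D <= 6/5.
  apply: (le_trans _ expR16).
  have E6 : expR (1/6 : R) = \sum_(a < K) softmax th a * expR (1/6).
    by rewrite -mulr_suml sum_softmax; ring.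
  rewrite [X in _ <= X]E6.
  apply: ler_sum => a _; apply: ler_wpM2l; first exact: ltW (softmax_gt0 _ _).
  rewrite ler_expR; exact: le_trans (ler_norm _) (xle a).
have Dgt : 0 < D.
  rewrite /D (bigD1 astar) //=.
  have h1 : 0 < softmax th astar * expR (x astar) by rewrite mulr_gt0 ?softmax_gt0 ?expR_gt0.
  have h2 : 0 <= \sum_(i < K | i != astar) softmax th i * expR (x i).
    apply: sumr_ge0 => a _; apply: mulr_ge0; [exact: ltW (softmax_gt0 _ _)|exact: ltW (expR_gt0 _)].
  lra.
have numE : \sum_(a < K) softmax th a * expR (x a) * (r a - p) =
    \sum_(a < K) softmax th a * ((expR (x a) - 1) * (r a - p)).
  have := sum_pw th; rewrite -/p => s0.
  have : \sum_(a < K) softmax th a * expR (x a) * (r a - p) -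
     \sum_(a < K) softmax th a * (r a - p) =
     \sum_(a < K) softmax th a * ((expR (x a) - 1) * (r a - p)).
    by rewrite -sumrB; apply: eq_bigr => a _; ring.
  by rewrite s0 subr0.
have numge : 5/36 * N <= \sum_(a < K) softmax th a * expR (x a) * (r a - p).
  rewrite numE.
  have -> : 5/36 * N = \sum_(a < K) 5/36 * (Gv th a ^+ 2 / N).
    rewrite -mulr_sumr -mulr_suml -Nv_sq -/N; field; exact: lt0r_neq0.
  apply: ler_sum => a _.
  have k0 : 0 <= softmax th a / (6 * N).
    apply: divr_ge0; first exact: ltW (softmax_gt0 _ _).
    by rewrite mulr_ge0 // ltW.
  have xa : `|softmax th a / (6 * N) * (r a - p)| <= 1/6 by rewrite -xE.
  have H := exp_term (softmax th a / (6 * N)) (r a - p) k0 xa; rewrite -xE in H.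
  have pa := softmax_gt0 th a.
  have -> : 5 / 36 * (Gv th a ^+ 2 / N) = softmax th a * (5 / 6 * (softmax th a / (6 * N)) * (r a - p) ^+ 2).
    rewrite /Gv -/p; field; exact: lt0r_neq0.
  by rewrite ler_wpM2l // ltW.
rewrite ler_pdivlMr //.
have : N / 12 * D <= N / 12 * (6/5) by rewrite ler_wpM2l // divr_ge0 // ltW.
move=> h; apply: le_trans h _; apply: le_trans numge; rewrite /N; lra.


Qed.


Lemma gap_step th :
  gap r astar (npg_step r (1/6) th) <= (1 - softmax th astar / 12) * gap r astar th.
Proof.
have h1 := progress th; have h2 := NL th.
rewrite !gap_val in h2 *.
set p := value r th in h1 h2 *; set p' := value r _ in h1 *.
set q := softmax th astar in h2 *.
lra.
Qed.

Lemma value_step th : value r th <= value r (npg_step r (1/6) th).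
Proof.
have h1 := progress th; have h2 := Nv_gt0 th.
set N := Nv th in h1 h2; lra.
Qed.

Lemma expR_ratio th a b : expR (th a - th b) = softmax th a / softmax th b.
Proof.
rewrite expRD expRN /softmax.
have := Zs_gt0 th; rewrite /Zs => Zg.
have := expR_gt0 (th b) => eb.
field; rewrite (lt0r_neq0 Zg) (lt0r_neq0 eb) //.
Qed.

Lemma exp_neg_le (y : R) : 0 <= y <= 1 -> expR (- y) <= 1 - y / 2.
Proof.
case/andP=> y0 y1.
have h1 := expR_ge1Dx y.
have h3 : expR y * expR (- y) = 1 by rewrite -expRD subrr expR0.
have e1 := expR_gt0 (- y).
set E := expR y in h1 h3; set E' := expR (- y) in h3 e1 *.
have : E' * (1 + y) <= 1 by nra.
nra.
Qed.

Lemma sum_sq_ge (P : pred 'I_K) (u : 'I_K -> R) :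
  (\sum_(a < K | P a) u a) ^+ 2 / K%:R <= \sum_(a < K | P a) u a ^+ 2.
Proof.
set S := \sum_(a < K | P a) u a.
have Kgt : 0 < (K%:R : R) by rewrite ltr0n.
set m := S / K%:R.
have h1 : \sum_(a < K | P a) (2 * m * u a - m ^+ 2) <= \sum_(a < K | P a) u a ^+ 2.
  apply: ler_sum => a _; rewrite -subr_ge0.
  have -> : u a ^+ 2 - (2 * m * u a - m ^+ 2) = (u a - m) ^+ 2 by ring.
  exact: sqr_ge0.
have h2 : \sum_(a < K | P a) m ^+ 2 <= K%:R * m ^+ 2.
  have -> : K%:R * m ^+ 2 = \sum_(a < K) m ^+ 2.
    by rewrite sumr_const card_ord mulr_natl.
  rewrite [X in _ <= X](bigID P) /= lerDl; apply: sumr_ge0 => a _; exact: sqr_ge0.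
rewrite sumrB -mulr_sumr -/S in h1.
apply: le_trans h1; rewrite /m.
have : S ^+ 2 / K%:R = 2 * (S / K%:R) * S - K%:R * (S / K%:R) ^+ 2.
  by field; exact: lt0r_neq0.
move=> ->; rewrite lerD2l lerN2; exact: h2.
Qed.

Lemma sA th L : value r th <= L -> L < r astar -> L <= 1 ->
  r astar - L <= \sum_(a < K | r a < L) expR (th a - th astar).
Proof.
move=> hp hL hL1.
under eq_bigr => a _ do rewrite expR_ratio.
rewrite -mulr_suml.
have qg := softmax_gt0 th astar.
rewrite ler_pdivlMr //.
have E0 : 0 <= \sum_(a < K) softmax th a * (L - r a).
  have -> : \sum_(a < K) softmax th a * (L - r a) = L - value r th.
    under eq_bigr => a _ do rewrite mulrBr.
    by rewrite sumrB -mulr_suml sum_softmax mul1r.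
  by rewrite subr_ge0.
rewrite (bigID (fun a => r a < L)) /= in E0.
have E1 : \sum_(a < K | ~~ (r a < L)) softmax th a * (L - r a) <= softmax th astar * (L - r astar).
  rewrite (bigD1 astar) /=; last by rewrite -leNgt ltW.
  rewrite gerDl; apply: sumr_le0 => a /andP [ha _].
  rewrite -leNgt in ha.
  apply: mulr_ge0_le0; first exact: ltW (softmax_gt0 _ _).
  by rewrite subr_le0.
have E2 : \sum_(a < K | r a < L) softmax th a * (L - r a) <= \sum_(a < K | r a < L) softmax th a.
  apply: ler_sum => a _; apply: ler_piMr; first exact: ltW (softmax_gt0 _ _).
  by case/andP: (hr a) => ha _; lra.
nra.
Qed.


Lemma sB th L g : value r th <= L -> L - g / 2 < value r th -> 0 < g ->
  (forall a, r a < L -> g <= L - r a) ->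
  \sum_(a < K | r a < L) expR (npg_step r (1/6) th a - npg_step r (1/6) th astar) <=
  (1 - g / (48 * K%:R)) * \sum_(a < K | r a < L) expR (th a - th astar).
Proof.
move=> hpL hpg g0 hg.
have Ngt := Nv_gt0 th.
have qg := softmax_gt0 th astar.
have Gs := Gstar_gt0 th.
set N := Nv th in Ngt *.
set q := softmax th astar in qg *.
set p := value r th in hpL hpg *.
have Kgt : 0 < (K%:R : R) by rewrite ltr0n.
pose y a := softmax th a * g / (12 * N).
have wB a : r a < L -> r a - p <= - (g / 2).
  by move=> /hg; lra.
have GB a : r a < L -> Gv th a <= - (softmax th a * g / 2).
  move=> /wB h; rewrite /Gv -/p.
  have pa := softmax_gt0 th a.
  have -> : - (softmax th a * g / 2) = softmax th a * (- (g / 2)) by ring.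
  by rewrite ler_wpM2l // ltW.
have yB a : r a < L -> 0 <= y a <= 1.
  move=> ha; have pa := softmax_gt0 th a.
  have h1 := GB a ha.
  have h2 : - Gv th a <= N by apply: le_trans (G_le_N th a); rewrite -normrN ler_norm.
  have N12 : 0 < 12 * N by rewrite mulr_gt0.
  apply/andP; split.
    by rewrite /y; apply: divr_ge0; [apply: mulr_ge0; apply: ltW|apply: ltW].
  rewrite /y ler_pdivrMr // mul1r; lra.
have dB a : r a < L -> npg_step r (1/6) th a - npg_step r (1/6) th astar <=
     (th a - th astar) - y a.
  move=> ha; rewrite npg_stepE /= -/N.
  have h1 := GB a ha.
  have : (1/6) * ((Gv th a - Gv th astar) / N) <= - y a.
    rewrite /y.
    have -> : 1 / 6 * ((Gv th a - Gv th astar) / N) = (2 * (Gv th a - Gv th astar)) / (12 * N).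
      by field; exact: lt0r_neq0.
    have -> : - (softmax th a * g / (12 * N)) = (- (softmax th a * g)) / (12 * N).
      by rewrite mulNr.
    rewrite ler_pM2r ?invr_gt0 ?mulr_gt0 //; lra.
  lra.
have eB a : r a < L -> expR (npg_step r (1/6) th a - npg_step r (1/6) th astar) <=
    expR (th a - th astar) * (1 - y a / 2).
  move=> ha; apply: (@le_trans _ _ (expR ((th a - th astar) - y a))).
    by rewrite ler_expR; exact: dB.
  rewrite expRD; apply: ler_wpM2l; first exact: ltW (expR_gt0 _).
  exact: exp_neg_le (yB a ha).
set P := \sum_(a < K | r a < L) softmax th a.
have P0 : 0 <= P by apply: sumr_ge0 => a _; exact: ltW (softmax_gt0 _ _).
have sE : \sum_(a < K | r a < L) expR (th a - th astar) = P / q.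
  by rewrite /P mulr_suml; apply: eq_bigr => a _; rewrite expR_ratio.
have NP : N <= 2 * P.
  have hN := N_le_sumabs th; rewrite -/N in hN.
  have sG := sum_G th.
  rewrite (bigID (fun a => r a < L)) /= in hN.
  rewrite (bigID (fun a => r a < L)) /= in sG.
  have e1 : \sum_(a < K | r a < L) `|Gv th a| = - \sum_(a < K | r a < L) Gv th a.
    rewrite -sumrN; apply: eq_bigr => a ha; apply: ler0_norm.
    have := GB a ha; have := softmax_gt0 th a; nra.
  have e2 : \sum_(a < K | ~~ (r a < L)) `|Gv th a| = \sum_(a < K | ~~ (r a < L)) Gv th a.
    apply: eq_bigr => a ha; apply: ger0_norm; rewrite /Gv -/p.
    apply: mulr_ge0; first exact: ltW (softmax_gt0 _ _).
    by rewrite -leNgt in ha; lra.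
  have e3 : - \sum_(a < K | r a < L) Gv th a <= P.
    rewrite -sumrN; apply: ler_sum => a _; rewrite /Gv -/p.
    have pa := softmax_gt0 th a; have p1 : p <= 1 by exact: value_le1.
    case/andP: (hr a) => r0 _.
    have -> : - (softmax th a * (r a - p)) = softmax th a * (p - r a) by ring.
    apply: ler_piMr; [exact: ltW | lra].
  rewrite e1 e2 in hN.
  lra.
have sq := sum_sq_ge (fun a => r a < L) (softmax th); rewrite -/P in sq.
have s1 : \sum_(a < K | r a < L) expR (npg_step r (1/6) th a - npg_step r (1/6) th astar) <=
    P / q - (g / (24 * N * q)) * \sum_(a < K | r a < L) softmax th a ^+ 2.
  apply: le_trans (ler_sum _ (fun a ha => eB a ha)) _.
  rewrite -sE mulr_sumr -sumrB; apply: ler_sum => a _; rewrite le_eqVlt; apply/orP; left; apply/eqP.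
  rewrite expR_ratio /y -/q; field.
  by rewrite (lt0r_neq0 qg) (lt0r_neq0 Ngt).
apply: le_trans s1 _; rewrite sE.
have h3 : g / (24 * N * q) * (P ^+ 2 / K%:R) <= g / (24 * N * q) * \sum_(a < K | r a < L) softmax th a ^+ 2.
  have c0 : 0 < g / (24 * N * q).
    apply: divr_gt0 => //; apply: mulr_gt0 => //; exact: mulr_gt0.
  by apply: ler_wpM2l => //; apply: ltW.
have h4 : g / (48 * K%:R) * (P / q) <= g / (24 * N * q) * (P ^+ 2 / K%:R).
  have -> : g / (24 * N * q) * (P ^+ 2 / K%:R) = (g / (48 * K%:R) * (P / q)) * (2 * P / N).
    by field; rewrite (lt0r_neq0 qg) (lt0r_neq0 Ngt) (lt0r_neq0 Kgt).
  have A0 : 0 <= g / (48 * K%:R) * (P / q).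
    have h48 : 0 <= 48 * (K%:R : R) by rewrite mulr_ge0 // ltW.
    apply: mulr_ge0; apply: divr_ge0; by [exact: ltW | ].
  rewrite -[X in X <= _]mulr1; apply: ler_wpM2l => //.
  by rewrite ler_pdivlMr // mul1r.
lra.
Qed.

Lemma fin_min_pos (T : finType) (P : pred T) (f : T -> R) :
  (forall a, P a -> 0 < f a) -> exists2 g : R, 0 < g & forall a, P a -> g <= f a.
Proof.
move=> hf; exists (\big[Order.min/1]_(a | P a) f a).
  by elim/big_ind: _ => //= x y hx hy; rewrite lt_min hx hy.
by move=> a Pa; rewrite (bigD1 a) //= ge_min lexx.
Qed.

Lemma pistar_lb th D : (forall a, a != astar -> D <= r astar - r a) -> 0 <= D ->
  (1 - softmax th astar) * D <= gap r astar th.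
Proof.
move=> hD D0; rewrite gap_eq (bigD1 astar) //= subrr mulr0 add0r.
have : \sum_(a < K | a != astar) softmax th a = 1 - softmax th astar.
  have := sum_softmax th; rewrite (bigD1 astar) //= => h; lra.
move=> <-; rewrite mulr_suml; apply: ler_sum => a ha.
by apply: ler_wpM2l; [exact: ltW (softmax_gt0 _ _) | exact: hD].
Qed.

Variable theta : nat -> ('I_K -> R).
Hypothesis hstep : forall t, (1 <= t)%N -> theta t.+1 = npg_step r (1 / 6) (theta t).

Lemma mono_val t n : (1 <= t)%N -> value r (theta t) <= value r (theta (t + n)).
Proof.
move=> t1; elim: n => [|n IH]; first by rewrite addn0.
apply: le_trans IH _; rewrite addnS hstep; first exact: value_step.
exact: leq_trans t1 (leq_addr n t).
Qed.

Lemma conv eps : 0 < eps -> exists2 t, (1 <= t)%N & gap r astar (theta t) < eps.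
Proof.
move=> e0.
case: (pselect (exists2 t, (1 <= t)%N & gap r astar (theta t) < eps)) => // H.
exfalso.
have Hall t : (1 <= t)%N -> eps <= gap r astar (theta t).
  by move=> t1; rewrite leNgt; apply/negP => h; apply: H; exists t.
pose E := [set value r (theta t) | t in [set t : nat | (1 <= t)%N]].
have En : E !=set0 by exists (value r (theta 1)); exists 1%N.
have hsup : has_sup E.
  by split => //; exists 1 => _ [t _ <-]; exact: value_le1.
set L := sup E.
have ub t : (1 <= t)%N -> value r (theta t) <= L.
  by move=> t1; apply: sup_upper_bound => //; exists t.
have hL : L <= r astar - eps.
  apply: ge_sup => // _ [t t1 <-]; have := Hall t t1; rewrite gap_val; lra.
have r1 : r astar <= 1 by case/andP: (hr astar).
have L1 : L <= 1 by lra.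
have Lr : L < r astar by lra.
have [g g0 hg] := @fin_min_pos _ (fun a => r a < L) (fun a => L - r a)
  (fun a (ha : r a < L) => ltac:(by rewrite subr_gt0)).
have g20 : 0 < g / 2 by rewrite divr_gt0.
have [e [T T1 eE] hT] := sup_adherent g20 hsup.
rewrite -eE -/L in hT.
pose s t := \sum_(a < K | r a < L) expR (theta t a - theta t astar).
have sLB t : (1 <= t)%N -> r astar - L <= s t.
  by move=> t1; apply: sA => //; exact: ub.
pose k := g / (48 * K%:R).
have Kgt : 0 < (K%:R : R) by rewrite ltr0n.
have k0 : 0 < k by rewrite divr_gt0 // mulr_gt0.
have sDec n : s (T + n)%N.+1 <= (1 - k) * s (T + n)%N.
  have t1 : (1 <= T + n)%N by exact: leq_trans T1 (leq_addr n T).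
  rewrite /s hstep //; apply: sB.
  - exact: ub.
  - exact: lt_le_trans hT (mono_val T n T1).
  - exact: g0.
  - exact: hg.
have s0 n : 0 <= s n by apply: sumr_ge0 => a _; exact: ltW (expR_gt0 _).
have ind n : s (T + n)%N * (1 + n%:R * k) <= s T.
  elim: n => [|n IH]; first by rewrite mul0r addr0 addn0 mulr1.
  apply: le_trans IH; rewrite addnS.
  have h1 := sDec n; have h2 := s0 (T + n)%N; have h3 := s0 (T + n)%N.+1.
  have hc : 0 <= 1 + n.+1%:R * k by rewrite addr_ge0 // mulr_ge0 // ltW.
  have : s (T + n)%N.+1 * (1 + n.+1%:R * k) <= (1 - k) * s (T + n)%N * (1 + n.+1%:R * k).
    exact: ler_wpM2r.
  rewrite -natr1.
  set S := s (T + n)%N; set S' := s (T + n)%N.+1; set m := (n%:R : R).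
  have m0 : 0 <= m by rewrite /m ler0n.
  move=> Hh; apply: le_trans Hh _; rewrite -subr_ge0.
  have -> : S * (1 + m * k) - (1 - k) * S * (1 + (m + 1) * k) = S * ((m + 1) * k ^+ 2) by ring.
  apply: mulr_ge0 => //; apply: mulr_ge0; [lra | exact: sqr_ge0].
set d := r astar - L.
have d0 : 0 < d by rewrite /d; lra.
set x := s T / (d * k).
have x0 : 0 <= x by rewrite /x divr_ge0 // ltW // mulr_gt0.
have hx := archi_boundP x0.
set n := Num.Def.archi_bound x in hx.
have h1 := ind n.
have h2 := sLB (T + n)%N%N (leq_trans T1 (leq_addr n T)).
have h3 : s T < n%:R * k * d.
  have dk : 0 < d * k by exact: mulr_gt0.
  move: hx; rewrite /x ltr_pdivrMr // => hx.
  have -> : n%:R * k * d = n%:R * (d * k) by ring.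
  exact: hx.
have hc : 0 <= 1 + n%:R * k by rewrite addr_ge0 // mulr_ge0 // ltW.
have : d * (1 + n%:R * k) <= s (T + n)%N * (1 + n%:R * k) by exact: ler_wpM2r.
lra.
Qed.


Lemma gap_ge0 th : 0 <= gap r astar th.
Proof. by rewrite gap_val subr_ge0 ltW // value_lt. Qed.

Lemma main_sec :
  let c := inf [set softmax (theta t) astar | t in [set t : nat | (1 <= t)%N]] in
  0 < c /\
  forall t, (1 <= t)%N ->
    gap r astar (theta t) <= expR (- (c * (t - 1)%:R) / 12) * gap r astar (theta 1%N).
Proof.
set S := [set softmax (theta t) astar | t in [set t : nat | (1 <= t)%N]].
move=> c.
have [D D0 hD] := @fin_min_pos _ (fun a => a != astar) (fun a => r astar - r a)
  (fun a (ha : a != astar) => ltac:(by rewrite subr_gt0; exact: hmax)).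
have D20 : 0 < D / 2 by rewrite divr_gt0.
have [T0 T01 hT0] := conv (D / 2) D20.
have big t : (T0 <= t)%N -> 1/2 < softmax (theta t) astar.
  move=> ht.
  have hg : gap r astar (theta t) <= gap r astar (theta T0).
    rewrite !gap_val -(subnKC ht); have := mono_val T0 (t - T0) T01; lra.
  have hl := pistar_lb (theta t) D hD (ltW D0).
  have : (1 - softmax (theta t) astar) * D < 1/2 * D by lra.
  rewrite ltr_pM2r //; lra.
have [m m0 hm] := @fin_min_pos 'I_T0 predT (fun i => softmax (theta i) astar)
  (fun i _ => softmax_gt0 _ _).
set b := Order.min (1/2 : R) m.
have b0 : 0 < b by rewrite /b lt_min m0 andbT.
have lbS : lbound S b.
  move=> _ [t t1 <-]; rewrite /b ge_min; apply/orP.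
  case: (ltnP t T0) => ht; first by right; exact: (hm (Ordinal ht)).
  by left; apply: ltW; exact: big.
have Sn : S !=set0 by exists (softmax (theta 1) astar); exists 1%N.
have cpos : b <= c by exact: lb_le_inf.
have hlb : has_lbound S.
  exists 0 => _ [t _ <-]; exact: ltW (softmax_gt0 _ _).
have cle t : (1 <= t)%N -> c <= softmax (theta t) astar.
  by move=> t1; apply: (ge_inf hlb); exists t.
split; first exact: lt_le_trans b0 cpos.
have key n : gap r astar (theta n.+1) <= expR (- (c * n%:R) / 12) * gap r astar (theta 1%N).
  elim: n => [|n IH]; first by rewrite mulr0 oppr0 mul0r expR0 mul1r.
  have h1 : gap r astar (theta n.+2) <= (1 - softmax (theta n.+1) astar / 12) * gap r astar (theta n.+1).
    by rewrite hstep //; exact: gap_step.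
  have h2 := cle n.+1 isT.
  have h3 := gap_ge0 (theta n.+1).
  have h4 := expR_ge1Dx (- c / 12).
  have h5 : (1 - softmax (theta n.+1) astar / 12) * gap r astar (theta n.+1) <=
      expR (- c / 12) * gap r astar (theta n.+1).
    by apply: ler_wpM2r => //; lra.
  have h6 : expR (- c / 12) * gap r astar (theta n.+1) <=
      expR (- c / 12) * (expR (- (c * n%:R) / 12) * gap r astar (theta 1%N)).
    by apply: ler_wpM2l => //; exact: ltW (expR_gt0 _).
  have -> : expR (- (c * n.+1%:R) / 12) = expR (- c / 12) * expR (- (c * n%:R) / 12).
    by rewrite -expRD -natr1; congr expR; ring.
  rewrite -mulrA; exact: le_trans h1 (le_trans h5 h6).
case=> [//|n] _.
have -> : (n.+1 - 1 = n)%N by rewrite subn1.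
exact: key.
Qed.

End S.

Theorem theorem2 (R : realType) (K : nat) (hK : (2 <= K)%N)
  (r : 'I_K -> R) (hr : forall a, 0 <= r a <= 1)
  (astar : 'I_K) (hmax : forall a, a != astar -> r a < r astar)
  (theta : nat -> ('I_K -> R))
  (hstep : forall t, (1 <= t)%N -> theta t.+1 = npg_step r (1 / 6) (theta t)) :
  let c := inf [set softmax (theta t) astar | t in [set t : nat | (1 <= t)%N]] in
  0 < c /\
  forall t, (1 <= t)%N ->
    gap r astar (theta t) <= expR (- (c * (t - 1)%:R) / 12) * gap r astar (theta 1%N).
Proof.
exact: (@main_sec R K r (ltnW hK) hK hr astar hmax theta hstep).
Qed.
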